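(* Let $f:[0,\infty)\to\mathbb{R}$ be differentiable, let $0<a<b<\infty$, and suppose $f'$ is Lebesgue integrable on $[a,b]$. Let $(\alpha,m)\in(0,1]^2$ and $q>1$, and suppose $|f'|^q$ is $(\alpha,m)$-GA-convex on $[0,\max\{a^{1/m},b\}]$. Then \[ \biggl|\frac{b^2f(b)-a^2f(a)}{2}-\int_a^b xf(x)\,dx\biggr|\le\frac{\ln b-\ln a}{2}\Bigl\{m\bigl[L(a^{3q},b^{3q})-G(\alpha,3q)\bigr]\bigl|f'(a^{1/m})\bigr|^q+G(\alpha,3q)|f'(b)|^q\Bigr\}^{1/q}. \]
   Context: For $c>0$, $h:[0,c]\to\mathbb{R}$ and $(\alpha,m)\in(0,1]^2$, $h$ is called $(\alpha,m)$-GA-convex on $[0,c]$ if $h\bigl(x^\lambda y^{m(1-\lambda)}\bigr)\le\lambda^\alpha h(x)+m(1-\lambda^\alpha)h(y)$ for all $x,y\in[0,c]$ and all $\lambda\in[0,1]$ (with the convention $0^0=1$). For fixed $0<a<b$ and $\ell\ge0$, $\alpha>0$, set $G(\alpha,\ell)=\int_0^1 t^\alpha a^{\ell(1-t)}b^{\ell t}\,dt$. For $x,y>0$, $x\neq y$, the logarithmic mean is $L(x,y)=\frac{y-x}{\ln y-\ln x}$. *)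

(* Defs.v *)
From Stdlib Require Import Reals Lra.
Open Scope R_scope.

(* Real power x^y for x >= 0, with the conventions 0^y = 0 for y <> 0
   and 0^0 = 1 (Stdlib's Rpower gives Rpower 0 y = 1, which is wrong). *)
Definition pw (x y : R) : R :=
  if Rlt_dec 0 x then Rpower x y
  else if Req_EM_T y 0 then 1 else 0.

Definition ga_convex (alpha m c : R) (h : R -> R) : Prop :=
  forall x y lam : R,
    0 <= x <= c -> 0 <= y <= c -> 0 <= lam <= 1 ->
    h (pw x lam * pw y (m * (1 - lam)))
      <= pw lam alpha * h x + m * (1 - pw lam alpha) * h y.

Definition logmean (x y : R) : R := (y - x) / (ln y - ln x).

Definition right_deriv (f : R -> R) (x l : R) : Prop :=
  forall eps : R, 0 < eps -> exists delta : R, 0 < delta /\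
    forall h : R, 0 < h < delta -> Rabs ((f (x + h) - f x) / h - l) < eps.

Definition diff_on_nonneg (f f' : R -> R) : Prop :=
  right_deriv f 0 (f' 0) /\ forall x : R, 0 < x -> derivable_pt_lim f x (f' x).

(* Integrand of G(alpha, l) = int_0^1 t^alpha a^(l(1-t)) b^(l t) dt. *)
Definition G_integrand (a b alpha l : R) (t : R) : R :=
  pw t alpha * Rpower a (l * (1 - t)) * Rpower b (l * t).

(* Main.v *)
From Coquelicot Require Import Coquelicot.
From Stdlib Require Import Reals Lra.
Require Import Defs.
Open Scope R_scope.

Lemma young (y r : R) : 0 < y -> 0 < r < 1 -> Rpower y r <= r * y + 1 - r.
Proof.
  intros Hy Hr.
  set (h := fun z => r * z + 1 - r - exp (r * ln z)).
  assert (Hd : forall z, 0 < z -> derivable_pt_lim h z (r - r * exp ((r - 1) * ln z))).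
  { intros z Hz. apply is_derive_Reals. unfold h. auto_derive. lra.
    replace ((r-1) * ln z) with (r * ln z + - ln z) by ring.
    rewrite exp_plus, exp_Ropp, exp_ln by lra. field. lra. }
  assert (H1 : h 1 = 0). { unfold h. rewrite ln_1, Rmult_0_r, exp_0. ring. }
  unfold Rpower. enough (0 <= h y) by (unfold h in *; lra).
  destruct (Rtotal_order y 1) as [Hlt|[Heq|Hgt]].
  - destruct (MVT_cor2 h (fun z => r - r * exp ((r - 1) * ln z)) y 1 Hlt) as [c [Hc1 Hc2]].
    { intros c Hc. apply Hd. lra. }
    assert (1 < exp ((r-1) * ln c)).
    { assert (ln c < 0).
      { rewrite <- ln_1. apply ln_increasing; lra. }
      assert (Hp : 0 < (r-1) * ln c).
      { replace ((r-1)*ln c) with ((1-r)*(-ln c)) by ring. apply Rmult_lt_0_compat; lra. }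
      pose proof (exp_increasing _ _ Hp) as He. rewrite exp_0 in He. exact He. }
    assert (0 < r * (exp ((r-1) * ln c) - 1) * (1 - y)) by (repeat apply Rmult_lt_0_compat; lra).
    nra.
  - subst. lra.
  - destruct (MVT_cor2 h (fun z => r - r * exp ((r - 1) * ln z)) 1 y Hgt) as [c [Hc1 Hc2]].
    { intros c Hc. apply Hd. lra. }
    assert (exp ((r-1) * ln c) < 1).
    { assert (0 < ln c).
      { rewrite <- ln_1. apply ln_increasing; lra. }
      assert (Hp : (r-1) * ln c < 0).
      { replace ((r-1)*ln c) with (-((1-r)*(ln c))) by ring.
        assert (0 < (1-r)*ln c) by (apply Rmult_lt_0_compat; lra). lra. }
      pose proof (exp_increasing _ _ Hp) as He. rewrite exp_0 in He. exact He. }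
    assert (0 < r * (1 - exp ((r-1) * ln c)) * (y - 1)) by (repeat apply Rmult_lt_0_compat; lra).
    nra.
Qed.

Lemma pw_pos x y : 0 < x -> pw x y = Rpower x y.
Proof. intros H. unfold pw. destruct (Rlt_dec 0 x); [reflexivity|lra]. Qed.

Lemma pw_nonpos x y : x <= 0 -> y <> 0 -> pw x y = 0.
Proof. intros H Hy. unfold pw. destruct (Rlt_dec 0 x); [lra|].
  destruct (Req_EM_T y 0); [lra|reflexivity]. Qed.

Lemma Rpower_pos x y : 0 < Rpower x y.
Proof. unfold Rpower. apply exp_pos. Qed.

Lemma pw_nonneg x y : 0 <= pw x y.
Proof. unfold pw. destruct (Rlt_dec 0 x). left; apply Rpower_pos.
  destruct (Req_EM_T y 0); lra. Qed.

Lemma cont_pw (al t : R) : 0 < al -> continuity_pt (fun x => pw x al) t.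
Proof.
  intros Hal.
  destruct (Rtotal_order t 0) as [Hlt|[Heq|Hgt]].
  - apply continuity_pt_filterlim. change (continuous (fun x => pw x al) t).
    apply (continuous_ext_loc _ (fun _ => 0)).
    { apply locally_interval with m_infty (Finite 0); simpl; auto.
      intros y _ Hy. rewrite pw_nonpos; lra. }
    apply continuous_const.
  - subst t. intros eps Heps.
    exists (Rpower eps (1/al)). split. apply Rpower_pos.
    intros x [_ Hx]. unfold R_dist in *. simpl in *. unfold R_dist in *.
    rewrite (pw_nonpos 0) by lra. rewrite Rminus_0_r in *.
    destruct (Rle_dec x 0).
    + rewrite pw_nonpos by lra. rewrite Rabs_R0. lra.
    + rewrite pw_pos by lra. rewrite Rabs_pos_eq by (left; apply Rpower_pos).
      rewrite Rabs_pos_eq in Hx by lra.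
      replace eps with (Rpower (Rpower eps (1/al)) al).
      apply Rlt_Rpower_l; lra.
      rewrite Rpower_mult. replace (1/al*al) with 1 by (field; lra). apply Rpower_1; lra.
  - apply continuity_pt_filterlim. change (continuous (fun x => pw x al) t).
    apply (continuous_ext_loc _ (fun x => exp (al * ln x))).
    { apply locally_interval with (Finite 0) p_infty; simpl; auto.
      intros y Hy _. rewrite pw_pos by lra. reflexivity. }
    apply (ex_derive_continuous (K:=R_AbsRing) (V:=R_NormedModule)). auto_derive. lra.
Qed.

Lemma young2 v u r : 0 <= v -> 0 < u -> 0 < r < 1 ->
  pw v r <= r * Rpower u (r - 1) * v + (1 - r) * Rpower u r.
Proof.
  intros Hv Hu Hr.
  assert (Hur : Rpower u (r - 1) = Rpower u r * / u).
  { unfold Rminus. rewrite Rpower_plus, Rpower_Ropp, Rpower_1 by lra. reflexivity. }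
  destruct Hv as [Hv|Hv].
  - rewrite pw_pos by lra.
    pose proof (young (v / u) r (Rdiv_lt_0_compat _ _ Hv Hu) Hr) as Y.
    replace v with (u * (v / u)) at 1 by (field; lra).
    rewrite <- Rpower_mult_distr by (try apply Rdiv_lt_0_compat; lra).
    rewrite Hur. pose proof (Rpower_pos u r).
    apply Rle_trans with (Rpower u r * (r * (v/u) + 1 - r)).
    apply Rmult_le_compat_l; lra.
    right. field. lra.
  - subst v. rewrite pw_nonpos by lra. pose proof (Rpower_pos u r). nra.
Qed.

Lemma mono_bound (Phi Psi dPhi dPsi : R -> R) :
  (forall t, 0 <= t <= 1 -> derivable_pt_lim Phi t (dPhi t)) ->
  (forall t, 0 <= t <= 1 -> derivable_pt_lim Psi t (dPsi t)) ->
  (forall t, 0 <= t <= 1 -> Rabs (dPhi t) <= dPsi t) ->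
  Rabs (Phi 1 - Phi 0) <= Psi 1 - Psi 0.
Proof.
  intros H1 H2 H3.
  destruct (MVT_cor2 (fun t => Psi t - Phi t) (fun t => dPsi t - dPhi t) 0 1 Rlt_0_1) as [c [Hc1 Hc2]].
  { intros e He. apply derivable_pt_lim_minus; auto. }
  destruct (MVT_cor2 (fun t => Psi t + Phi t) (fun t => dPsi t + dPhi t) 0 1 Rlt_0_1) as [d [Hd1 Hd2]].
  { intros e He. apply derivable_pt_lim_plus; auto. }
  assert (E1 := H3 c ltac:(lra)). assert (E2 := H3 d ltac:(lra)).
  apply Rabs_le_between in E1. apply Rabs_le_between in E2.
  apply Rabs_le. lra.
Qed.

Lemma Rpower_cube x q : 0 < x -> Rpower (x ^ 3) q = Rpower x (3 * q).
Proof. intros Hx. rewrite <- (Rpower_pow 3 x Hx), Rpower_mult. simpl. f_equal. ring. Qed.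

Theorem theorem3p3
  (f f' : R -> R) (a b alpha m q : R)
  (Hdiff : diff_on_nonneg f f')
  (Ha : 0 < a) (Hab : a < b)
  (Halpha : 0 < alpha <= 1) (Hm : 0 < m <= 1) (Hq : 1 < q)
  (Hconv : ga_convex alpha m (Rmax (Rpower a (1 / m)) b)
             (fun x => pw (Rabs (f' x)) q))
  (prG : Riemann_integrable (G_integrand a b alpha (3 * q)) 0 1)
  (prI : Riemann_integrable (fun x => x * f x) a b) :
  let G := RiemannInt prG in
  Rabs ((b ^ 2 * f b - a ^ 2 * f a) / 2 - RiemannInt prI)
  <= (ln b - ln a) / 2 *
     pw (m * (logmean (Rpower a (3 * q)) (Rpower b (3 * q)) - G)
           * pw (Rabs (f' (Rpower a (1 / m)))) q
         + G * pw (Rabs (f' b)) q) (1 / q).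
Proof.
  intros G.
  destruct Hdiff as [_ Hd].
  assert (Hlab : ln a < ln b) by (apply ln_increasing; lra).
  set (la := ln a) in *. set (lb := ln b) in *.
  set (X := fun t => exp ((1-t)*la + t*lb)).
  assert (HXpos : forall t, 0 < X t) by (intros; apply exp_pos).
  assert (HX0 : X 0 = a).
  { unfold X. replace ((1-0)*la+0*lb) with la by ring. unfold la. apply exp_ln; lra. }
  assert (HX1 : X 1 = b).
  { unfold X. replace ((1-1)*la+1*lb) with lb by ring. unfold lb. apply exp_ln; lra. }
  set (A := pw (Rabs (f' (Rpower a (1/m)))) q) in *.
  set (B := pw (Rabs (f' b)) q) in *.
  set (w := fun t => Rpower a (3*q*(1-t)) * Rpower b (3*q*t)).
  assert (Hw : forall t, w t = exp (3*q*((1-t)*la + t*lb))).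
  { intros t. unfold w, Rpower. rewrite <- exp_plus. f_equal. unfold la, lb. ring. }
  assert (HwX : forall t, w t = Rpower (X t) (3*q)).
  { intros t. rewrite Hw. unfold Rpower, X. rewrite ln_exp. f_equal. }
  set (g := G_integrand a b alpha (3*q)).
  assert (Hg : forall t, g t = pw t alpha * w t).
  { intros t. unfold g, G_integrand, w. ring. }
  set (maj := fun t => (B - m*A) * g t + m*A * w t).
  assert (HA : 0 <= A) by apply pw_nonneg.
  assert (HB : 0 <= B) by apply pw_nonneg.
  assert (Hpt : forall t, 0 <= t <= 1 ->
     X t ^ 3 * Rabs (f' (X t)) <= pw (maj t) (1/q) /\ 0 <= maj t).
  { intros t Ht.
    assert (Hc := Hconv b (Rpower a (1/m)) t).
    simpl in Hc.
    assert (EX : pw b t * pw (Rpower a (1 / m)) (m * (1 - t)) = X t).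
    { rewrite !pw_pos by (try apply Rpower_pos; lra). rewrite Rpower_mult.
      unfold Rpower, X. rewrite <- exp_plus. f_equal. unfold la, lb. field. lra. }
    rewrite EX in Hc. fold A B in Hc.
    specialize (Hc ltac:(split; [lra|apply Rmax_r]) ltac:(split; [left; apply Rpower_pos|apply Rmax_l]) Ht).
    assert (Emaj : maj t = w t * (pw t alpha * B + m * (1 - pw t alpha) * A)).
    { unfold maj. rewrite Hg. ring. }
    assert (Hwp : 0 < w t) by (rewrite Hw; apply exp_pos).
    pose proof (pw_nonneg (Rabs (f' (X t))) q) as Hv0.
    assert (Hm0 : 0 <= maj t) by (rewrite Emaj; apply Rmult_le_pos; lra).
    split; [|exact Hm0].
    destruct (Rabs_pos (f' (X t))) as [Hv|Hv].
    - rewrite pw_pos in Hc by lra.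
      pose proof (Rpower_pos (Rabs (f' (X t))) q).
      rewrite pw_pos by (rewrite Emaj; apply Rmult_lt_0_compat; lra).
      replace (X t ^ 3 * Rabs (f' (X t))) with
        (Rpower (Rpower (X t ^ 3 * Rabs (f' (X t))) q) (1/q)).
      2:{ rewrite Rpower_mult. replace (q * (1/q)) with 1 by (field; lra).
          apply Rpower_1. pose proof (HXpos t). apply Rmult_lt_0_compat; [apply pow_lt|]; lra. }
      apply Rle_Rpower_l. left; apply Rdiv_lt_0_compat; lra.
      split. apply Rpower_pos.
      rewrite <- Rpower_mult_distr by (try apply pow_lt; auto).
      rewrite Rpower_cube by auto. rewrite <- HwX. rewrite Emaj.
      apply Rmult_le_compat_l; lra.
    - rewrite <- Hv. rewrite Rmult_0_r. apply pw_nonneg. }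
  assert (Hcw : forall t, continuous w t).
  { intros t. apply (continuous_ext_loc _ (fun t => exp (3*q*((1-t)*la+t*lb)))).
    { apply filter_forall. intros y. symmetry. apply Hw. }
    apply (ex_derive_continuous (K:=R_AbsRing) (V:=R_NormedModule)). auto_derive. auto. }
  assert (Hcm : forall t, continuous maj t).
  { intros t. apply (continuous_ext_loc _ (fun t => plus (mult (B - m*A) (mult (pw t alpha) (w t))) (mult (m*A) (w t)))).
    { apply filter_forall. intros y. unfold maj. rewrite Hg. reflexivity. }
    apply (continuous_plus (K:=R_AbsRing) (V:=R_NormedModule));
      apply (continuous_mult (K:=R_AbsRing)); try apply continuous_const; auto.
    apply (continuous_mult (K:=R_AbsRing)); auto.
    apply continuity_pt_filterlim. apply cont_pw. lra. }
  assert (Hdf : forall y, 0 < y -> is_derive f y (f' y)) by (intros; apply is_derive_Reals; auto).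
  assert (Hcf : forall y, 0 < y -> continuous f y).
  { intros y Hy. apply (ex_derive_continuous (K:=R_AbsRing) (V:=R_NormedModule)). exists (f' y). auto. }
  assert (Hcsf : forall y, 0 < y -> continuous (fun s => s * f s) y).
  { intros y Hy. apply (continuous_mult (K:=R_AbsRing) (fun s => s) f). apply continuous_id. auto. }
  assert (Hexsf : forall y, 0 < y -> ex_RInt (fun s => s * f s) a y).
  { intros y Hy. apply (ex_RInt_continuous (V:=R_CompleteNormedModule)). intros z Hz. apply Hcsf.
    assert (0 < Rmin a y) by (apply Rmin_pos; lra). lra. }
  assert (Hexm : forall t, ex_RInt maj 0 t).
  { intros t. apply (ex_RInt_continuous (V:=R_CompleteNormedModule)). intros; auto. }
  assert (Key : forall u, 0 < u ->
    Rabs ((b^2 * f b - a^2*f a)/2 - RInt (fun s => s*f s) a b) <=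
      (lb - la)/2 * ((1/q) * Rpower u (1/q - 1) * RInt maj 0 1 + (1 - 1/q)*Rpower u (1/q))).
  { intros u Hu.
    set (c1 := (1/q) * Rpower u (1/q - 1)). set (c2 := (1 - 1/q)*Rpower u (1/q)).
    pose proof (mono_bound (fun t => X t ^2 * f (X t)/2 - RInt (fun s => s*f s) a (X t))
      (fun t => (lb-la)/2 * (c1 * RInt maj 0 t + c2 * t))
      (fun t => (lb-la)/2 * (X t ^3 * f' (X t)))
      (fun t => (lb-la)/2 * (c1 * maj t + c2))) as MB.
    cbv beta in MB.
    rewrite HX0, HX1, !RInt_point in MB.
    assert (D1 : forall t : R, 0 <= t <= 1 -> derivable_pt_lim
       (fun t0 : R => X t0 ^ 2 * f (X t0) / 2 - RInt (fun s : R => s * f s) a (X t0))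
       t ((lb - la) / 2 * (X t ^ 3 * f' (X t)))).
    { intros t Ht. apply is_derive_Reals. unfold X. auto_derive.
      - replace ((1 + - t) * la + t * lb) with ((1-t)*la+t*lb) by ring.
        assert (HE := exp_pos ((1-t)*la+t*lb)).
        split; [exists (f' (exp ((1-t)*la+t*lb))); apply Hdf; auto|].
        split; [apply Hexsf; auto|].
        split; [|exact I].
        apply locally_interval with (Finite 0) p_infty; simpl; auto.
        intros y Hy _. apply continuity_pt_filterlim. apply Hcsf; auto.
      - replace ((1 + - t) * la + t * lb) with ((1-t)*la+t*lb) by ring.
        assert (HE := exp_pos ((1-t)*la+t*lb)).
        rewrite (is_derive_unique (fun x => f x) _ (f' (exp ((1-t)*la+t*lb)))) by (apply Hdf; auto).
        field. }
    assert (D2 : forall t : R, 0 <= t <= 1 -> derivable_pt_lim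
       (fun t0 : R => (lb - la) / 2 * (c1 * RInt maj 0 t0 + c2 * t0)) t
       ((lb - la) / 2 * (c1 * maj t + c2))).
    { intros t Ht. apply is_derive_Reals. auto_derive.
      - split; [apply Hexm|]. split; [|exact I].
        apply filter_forall. intros y. apply continuity_pt_filterlim. apply Hcm.
      - ring. }
    assert (Hq1 : 0 < 1/q < 1) by (split; [apply Rdiv_lt_0_compat|apply (Rmult_lt_reg_r q); [|unfold Rdiv; rewrite Rmult_assoc, Rinv_l]]; lra).
    assert (D3 : forall t : R, 0 <= t <= 1 ->
     Rabs ((lb - la) / 2 * (X t ^ 3 * f' (X t))) <= (lb - la) / 2 * (c1 * maj t + c2)).
    { intros t Ht. destruct (Hpt t Ht) as [P1 P2].
      assert (HK : 0 < (lb - la)/2) by lra.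
      assert (HX3 : 0 < X t ^ 3) by (apply pow_lt; auto).
      rewrite !Rabs_mult, (Rabs_pos_eq ((lb-la)/2)), (Rabs_pos_eq (X t ^3)) by lra.
      apply Rmult_le_compat_l; [lra|].
      eapply Rle_trans; [exact P1|].
      pose proof (young2 (maj t) u (1/q) P2 Hu Hq1). unfold c1, c2. lra. }
    specialize (MB D1 D2 D3).
    refine (Rle_trans _ _ _ (Rle_trans _ _ _ (Req_le _ _ _) MB) (Req_le _ _ _)).
    - f_equal. unfold zero; simpl. field.
    - unfold zero; simpl. ring. }
  assert (HI : RiemannInt prI = RInt (fun s => s*f s) a b) by (symmetry; apply RInt_Reals).
  assert (HG : G = RInt g 0 1) by (unfold G; symmetry; apply RInt_Reals).
  set (F := fun t => exp (3*q*((1-t)*la+t*lb)) / (3*q*(lb-la))).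
  assert (HLi : is_RInt w 0 1 (minus (F 1) (F 0))).
  { apply (is_RInt_derive (V:=R_CompleteNormedModule)).
    - intros t _. unfold F. auto_derive. auto. rewrite Hw. replace ((1 + - t) * la + t * lb) with ((1-t)*la+t*lb) by ring. field. split; lra.
    - intros t _. auto. }
  assert (HL : logmean (Rpower a (3 * q)) (Rpower b (3 * q)) = RInt w 0 1).
  { rewrite (is_RInt_unique _ _ _ _ HLi). unfold logmean, minus, plus, opp, F; simpl.
    unfold Rpower. rewrite !ln_exp. fold la lb.
    replace ((1-1)*la+1*lb) with lb by ring. replace ((1-0)*la+0*lb) with la by ring.
    replace (3*q*lb - 3*q*la) with (3*q*(lb-la)) by ring. field. split; lra. }
  assert (Hexg : ex_RInt g 0 1) by (apply ex_RInt_Reals_1; exact prG).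
  assert (Hexw : ex_RInt w 0 1) by (eexists; exact HLi).
  assert (HS : RInt maj 0 1 = (B - m*A) * RInt g 0 1 + m*A * RInt w 0 1).
  { apply is_RInt_unique.
    apply (is_RInt_plus (V:=R_NormedModule) (fun t => scal (B-m*A) (g t)) (fun t => scal (m*A) (w t)));
      apply (is_RInt_scal (V:=R_NormedModule)); apply (RInt_correct (V:=R_CompleteNormedModule)); auto. }
  assert (HS0 : 0 <= RInt maj 0 1).
  { apply RInt_ge_0. lra. apply Hexm. intros t Ht. apply Hpt. lra. }
  rewrite HI, HL.
  replace (m * (RInt w 0 1 - G) * A + G * B) with (RInt maj 0 1).
  2:{ rewrite HS, HG. match goal with |- ?x = ?y => change (@eq R x y) end. ring. }
  assert (Hq1 : 0 < 1/q < 1) by (split; [apply Rdiv_lt_0_compat|apply (Rmult_lt_reg_r q); [|unfold Rdiv; rewrite Rmult_assoc, Rinv_l]]; lra).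
  assert (HK : 0 < (lb - la)/2) by lra.
  destruct HS0 as [Spos|S0].
  - rewrite pw_pos by auto. eapply Rle_trans; [apply (Key _ Spos)|]. right. f_equal.
    unfold Rminus. rewrite Rpower_plus, Rpower_Ropp, Rpower_1 by auto. field. lra.
  - rewrite <- S0. rewrite pw_nonpos by lra. rewrite Rmult_0_r.
    set (D := Rabs ((b ^ 2 * f b - a ^ 2 * f a) / 2 - RInt (fun s : R => s * f s) a b)) in *.
    destruct (Rle_or_lt D 0) as [HD|HD]; auto.
    assert (Hu : 0 < Rpower (D / ((lb - la)/2)) q) by apply Rpower_pos.
    specialize (Key _ Hu). rewrite <- S0 in Key. fold D in Key.
    rewrite !Rpower_mult in Key. replace (q * (1/q)) with 1 in Key by (field; lra).
    rewrite Rpower_1 in Key by (apply Rdiv_lt_0_compat; lra).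
    replace ((lb - la) / 2 * (1 / q * Rpower (D / ((lb - la) / 2)) (q * (1 / q - 1)) * 0 +
        (1 - 1 / q) * (D / ((lb - la) / 2)))) with ((1 - 1/q) * D) in Key by (field; lra).
    nra.
Qed.
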